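(* Let $\mathcal{M}$ be a set of mappings over a schema $\Sigma$, $\mathcal{D}$ a database instance of $\Sigma$, and $q(\vec x)\leftarrow L_1(\vec v_1),\dots,L_n(\vec v_n)$ a conjunctive query such that $\vec x=\bigcup_{i=1}^n\vec v_i$ (as sets of variables). Then $$|\mathrm{unf}(q(\vec x),\mathcal{M})^{\mathcal{D}}|=\sum_{q_u\in\mathrm{unf}(q,\mathrm{wrap}(\mathcal{M}))}|q_u(\vec x)^{\mathcal{D}}|,$$ where the sum ranges over the conjunctive queries (rules) $q_u$ of the unfolding of $q$ with respect to $\mathrm{wrap}(\mathcal{M})$.
   Context: A mapping is $L(\vec f(\vec x))\leftsquigarrow V(\vec x)$ with $L$ a concept or role name, $\vec f(\vec x)$ a tuple of terms each of the form $g(\vec y)$ ($g$ a function symbol, $\vec y\subseteq\vec x$), and $V$ a view name with extension $V^{\mathcal{D}}$ given by a query over $\Sigma$. Signature: $\mathrm{sign}(m)=(L,\vec f)$. Unfolding of a CQ $q(\vec x)\leftarrow L_1(\vec v_1),\dots,L_n(\vec v_n)$: the non-recursive Datalog query $(q_{\mathrm{unf}}(\vec x),\Pi)$ where $\Pi$ is a minimal (up to renaming) set of rules containing, for every tuple $(m_1,\dots,m_n)$ of mappings with $m_i=L_i(\vec f_i(\vec x_i))\leftsquigarrow V_i(\vec z_i)$ and every mgu $\sigma$ of $\{(L_i(\vec v_i),L_i(\vec f_i(\vec x_i)))\}$, the rule $q_{\mathrm{unf}}(\sigma(\vec x))\leftarrow V_1(\sigma(\vec z_1)),\dots,V_n(\sigma(\vec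 z_n))$; answers are (sets of) tuples of terms $f(\vec a)$. Wrap: for each signature $(L,\vec f)$, if the mappings of that signature are $\{L(\vec f(\vec v_i))\leftsquigarrow V_i(\vec v_i)\mid 1\le i\le k\}$, they are replaced by the single mapping $L(\vec f(\vec v))\leftsquigarrow W(\vec v)$ with fresh variables $\vec v$ and $W$ a fresh view for the Datalog query $(W(\vec v),\{W(\vec v_i)\leftarrow V_i(\vec v_i)\}_i)$ (so $W^{\mathcal{D}}=\bigcup_iV_i^{\mathcal{D}}$); $\mathrm{wrap}(\mathcal{M})$ is the union of these over all signatures. *)

(* Defs.v *)
From HB Require Import structures.
From mathcomp Require Import all_boot.
From Stdlib Require List.
Set Implicit Arguments. Unset Strict Implicit. Unset Printing Implicit Defensive.

(* First-order terms over function symbols (named by nat) with leaves  *)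
(* of type X.  Open terms: X = variables; ground terms: X = constants.  *)
Inductive term (X : Type) : Type :=
  | Leaf : X -> term X
  | Fn : nat -> seq (term X) -> term X.
Arguments Leaf {X}. Arguments Fn {X}.

Fixpoint enc_term X (t : term X) : GenTree.tree X :=
  match t with Leaf x => GenTree.Leaf x | Fn g ts => GenTree.Node g (map (@enc_term X) ts) end.
Fixpoint dec_term X (t : GenTree.tree X) : term X :=
  match t with GenTree.Leaf x => Leaf x | GenTree.Node g ts => Fn g (map (@dec_term X) ts) end.
Fixpoint enc_termK X (t : term X) : dec_term (enc_term t) = t :=
  match t with
  | Leaf x => erefl
  | Fn g ts => f_equal (Fn g)
      ((fix aux ts := match ts return map (@dec_term X) (map (@enc_term X) ts) = ts with
                      | [::] => erefl | t :: ts => f_equal2 cons (enc_termK t) (aux ts) end) ts)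
  end.
HB.instance Definition _ (X : countType) := Countable.copy (term X) (can_type (@enc_termK X)).

Fixpoint tmap X Y (f : X -> Y) (t : term X) : term Y :=
  match t with Leaf x => Leaf (f x) | Fn g ts => Fn g (map (tmap f) ts) end.
Fixpoint subst X Y (s : X -> term Y) (t : term X) : term Y :=
  match t with Leaf x => s x | Fn g ts => Fn g (map (subst s) ts) end.

Definition const := nat.

(* A database instance of Sigma: each relation symbol of Sigma (named by
   nat) is interpreted by a finite relation. *)
Definition instance := nat -> seq (seq const).
(* A view definition: for each view name, a query over Sigma, given by its
   (arbitrary) semantics  D |-> V^D.  *)
Definition view_defs := nat -> instance -> seq (seq const).

(* Conjunctive queries  q(x) <- L_1(v_1), ..., L_n(v_n)                 *)
Record cq := CQ { qhead : seq nat ; qbody : seq (nat * seq nat) }.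

(* Mappings  L(g_1(y_1),...,g_k(y_k)) <~ V(z), over view names Vn      *)
Record mapping (Vn : Type) := Mapping {
  mpred : nat ;
  mhead : seq (nat * seq nat) ;     (* terms g(y): (g, y) *)
  mview : Vn ;
  mbody : seq nat
}.

Definition mapping_wf Vn (m : mapping Vn) : Prop :=
  forall t, List.In t (mhead m) -> {subset t.2 <= mbody m}.

(* signature: (L, f), function symbols recorded with their arity *)
Definition signature := (nat * seq (nat * nat))%type.
Definition sign Vn (m : mapping Vn) : signature :=
  (mpred m, [seq (t.1, size t.2) | t <- mhead m]).

(* Non-recursive Datalog rules  q(t) <- V_1(u_1), ..., V_n(u_n)         *)
Record rule (X Vn : Type) := Rule { rhead : seq (term X) ; rbody : seq (Vn * seq (term X)) }.

(* semantics: ext gives the extension V^D of each view name *)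
Definition body_sat X Vn (ext : Vn -> seq const -> Prop) (nu : X -> const) (r : rule X Vn) : Prop :=
  forall a, List.In a (rbody r) ->
    exists tup, ext a.1 tup /\ map (tmap nu) a.2 = map Leaf tup.

Definition rule_ans X Vn (ext : Vn -> seq const -> Prop) (r : rule X Vn) (t : seq (term const)) : Prop :=
  exists nu : X -> const, body_sat ext nu r /\ t = map (tmap nu) (rhead r).

Definition dl_ans X Vn (ext : Vn -> seq const -> Prop) (Pi : seq (rule X Vn)) (t : seq (term const)) : Prop :=
  exists r, List.In r Pi /\ rule_ans ext r t.

Definition rename_rule X Vn (f : X -> X) (r : rule X Vn) : rule X Vn :=
  Rule (map (tmap f) (rhead r)) [seq (a.1, map (tmap f) a.2) | a <- rbody r].
Definition variant X Vn (r1 r2 : rule X Vn) : Prop :=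
  exists f : X -> X, bijective f /\ rename_rule f r1 = r2.

(* Variables of generated rules: (None, x) for a query variable x,     *)
(* (Some i, y) for variable y of the copy of the mapping used for the  *)
(* i-th atom (mappings are renamed apart).                             *)
Definition rvar := (option nat * nat)%type.

Definition mterm (i : nat) (t : nat * seq nat) : term rvar :=
  Fn t.1 [seq Leaf (Some i, y) | y <- t.2].

Definition adm_tuple Vn (M : seq (mapping Vn)) (q : cq) (ms : seq (mapping Vn)) : Prop :=
  size ms = size (qbody q) /\ (forall m, List.In m ms -> List.In m M).

Definition unifier Vn (q : cq) (ms : seq (mapping Vn)) (s : rvar -> term rvar) : Prop :=
  forall i a m, i < size (qbody q) -> nth a (qbody q) i = a -> nth m ms i = m ->
    mpred m = a.1 /\
    [seq s (None, v) | v <- a.2] = [seq subst s (mterm i t) | t <- mhead m].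

Definition mgu Vn (q : cq) (ms : seq (mapping Vn)) (s : rvar -> term rvar) : Prop :=
  unifier q ms s /\
  forall s', unifier q ms s' -> exists rho : rvar -> term rvar, forall x, s' x = subst rho (s x).

Definition gen_rule Vn (q : cq) (ms : seq (mapping Vn)) (s : rvar -> term rvar) : rule rvar Vn :=
  Rule [seq s (None, x) | x <- qhead q]
       [seq (im.2.(mview), [seq s (Some im.1, z) | z <- im.2.(mbody)]) | im <- zip (iota 0 (size ms)) ms].

Definition is_unfolding Vn (M : seq (mapping Vn)) (q : cq) (Pi : seq (rule rvar Vn)) : Prop :=
  (forall ms s, adm_tuple M q ms -> mgu q ms s ->
     exists r, List.In r Pi /\ variant r (gen_rule q ms s)) /\
  (forall r, List.In r Pi -> exists ms s, adm_tuple M q ms /\ mgu q ms s /\ variant r (gen_rule q ms s)) /\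
  List.ForallOrdPairs (fun r1 r2 => ~ variant r1 r2) Pi.

Fixpoint sig_head (off : nat) (fs : seq (nat * nat)) : seq (nat * seq nat) :=
  match fs with
  | [::] => [::]
  | (g, a) :: fs' => (g, iota off a) :: sig_head (off + a) fs'
  end.

(* for each signature, the single mapping L(f(v)) <~ W_sig(v); the fresh
   view W for a signature is named by the signature itself *)
Definition wrap_mapping (s : signature) : mapping signature :=
  Mapping s.1 (sig_head 0 s.2) s (iota 0 (sumn [seq p.2 | p <- s.2])).

Definition wrapM (M : seq (mapping nat)) : seq (mapping signature) :=
  [seq wrap_mapping s | s <- undup [seq sign m | m <- M]].

Definition base_ext (vdef : view_defs) (D : instance) (v : nat) (tup : seq const) : Prop :=
  tup \in vdef v D.

(* extension of W_sig: the Datalog query {W(y_i) <- V_i(z_i)}_i over the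
   mappings L(f(y_i)) <~ V_i(z_i) of signature sig, where y_i is the
   concatenation of the arguments of the head terms *)
Definition wrap_ext (vdef : view_defs) (D : instance) (M : seq (mapping nat))
    (s : signature) (tup : seq const) : Prop :=
  exists m, List.In m M /\ sign m = s /\
    exists nu : nat -> const,
      [seq nu z | z <- mbody m] \in vdef (mview m) D /\
      tup = [seq nu y | y <- flatten [seq t.2 | t <- mhead m]].

Definition card_is (T : eqType) (A : T -> Prop) (n : nat) : Prop :=
  exists s : seq T, uniq s /\ (forall t, A t <-> t \in s) /\ size s = n.

(* Main.v *)
Require Import Defs.
From mathcomp Require Import all_boot.
From Stdlib Require List.
From Stdlib Require Import ClassicalEpsilon.
Set Implicit Arguments. Unset Strict Implicit. Unset Printing Implicit Defensive.

Lemma In_map_iff (A B : Type) (f : A -> B) (s : seq A) y :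
  List.In y (map f s) <-> exists x, f x = y /\ List.In x s.
Proof.
elim: s => [|x s IH] /=; first by split => // [[x []]].
split.
- case=> [<-|H]; first by exists x; auto.
  case: (proj1 IH H) => z [<- H']; by exists z; auto.
- case=> z [E [->|H]]; first by left.
  by right; apply: (proj2 IH); exists z.
Qed.

Lemma In_map (A B : Type) (f : A -> B) (s : seq A) x :
  List.In x s -> List.In (f x) (map f s).
Proof. by move=> H; apply/In_map_iff; exists x. Qed.

Lemma In_mem (T : eqType) (x : T) s : List.In x s -> x \in s.
Proof.
elim: s => //= y s IH [->|H]; first by rewrite inE eqxx.
by rewrite inE IH ?orbT.
Qed.

Lemma mem_In (T : eqType) (x : T) s : x \in s -> List.In x s.
Proof.
elim: s => //= y s IH; rewrite inE => /orP [/eqP->|H]; first by left.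
by right; apply: IH.
Qed.

Lemma In_nth (T : Type) (x0 : T) s i : i < size s -> List.In (nth x0 s i) s.
Proof.
elim: s i => //= x s IH [|i] /= H; first by left.
by right; apply: IH.
Qed.

Lemma In_nth_ex (T : Type) (x : T) s : List.In x s -> exists i, i < size s /\ nth x s i = x.
Proof.
elim: s => //= y s IH [->|/IH [i [H1 H2]]]; first by exists 0.
by exists i.+1.
Qed.

Lemma eq_in_map_In (A B : Type) (f g : A -> B) (s : seq A) :
  (forall x, List.In x s -> f x = g x) -> map f s = map g s.
Proof.
elim: s => //= x s IH H; rewrite H; last by left.
by rewrite IH // => y Hy; apply: H; right.
Qed.

Lemma In_zip_iota (T : Type) (s : seq T) k p :
  List.In p (zip (iota k (size s)) s) -> k <= p.1 < k + size s /\ nth p.2 s (p.1 - k) = p.2.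
Proof.
elim: s k => //= x s IH k [<-|/IH [H1 H2]] /=.
  by rewrite leqnn subnn addnS ltnS leq_addr.
split; first by move: H1 => /andP [H3 H4]; apply/andP; split; [apply: ltnW|rewrite addnS -addSn].
move: H1 => /andP [H3 _].
have -> : p.1 - k = (p.1 - k.+1).+1 by rewrite subnS prednK // subn_gt0.
by [].
Qed.

Lemma map_eq_nth (A B : Type) (f g : A -> B) (s : seq A) x0 i :
  map f s = map g s -> i < size s -> f (nth x0 s i) = g (nth x0 s i).
Proof.
move=> H Hi; have := congr1 (fun l => nth (f x0) l i) H.
by rewrite /= !(nth_map x0).
Qed.

Lemma has_In (A : Type) (a : pred A) s : has a s <-> exists x, List.In x s /\ a x.
Proof.
elim: s => /=; first by split => // [[x []]].
move=> x s IH; split.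
- case/orP => [H|/IH [y [H1 H2]]]; first by exists x; auto.
  by exists y; auto.
- case=> y [[<-|H1] H2]; first by rewrite H2.
  by apply/orP; right; apply/IH; exists y.
Qed.

Definition pb (P : Prop) : bool := if excluded_middle_informative P then true else false.
Lemma pbP (P : Prop) : pb P <-> P.
Proof. by rewrite /pb; case: excluded_middle_informative. Qed.

Section TermInd.
Variable X : Type.
Variable P : term X -> Prop.
Hypothesis HL : forall x, P (Leaf x).
Hypothesis HF : forall g ts, List.Forall P ts -> P (Fn g ts).
Fixpoint term_ind' (t : term X) : P t :=
  match t with
  | Leaf x => HL x
  | Fn g ts => HF g ((fix aux ts := match ts return List.Forall P ts with
                       | [::] => List.Forall_nil P
                       | t :: ts => List.Forall_cons t (term_ind' t) (aux ts) end) ts)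
  end.
End TermInd.

Lemma map_Forall (A B : Type) (f g : A -> B) (s : seq A) :
  List.Forall (fun x => f x = g x) s -> map f s = map g s.
Proof. by elim=> //= x l Hx _ IH; rewrite Hx IH. Qed.

Lemma tmap_comp X Y Z (f : X -> Y) (g : Y -> Z) t : tmap g (tmap f t) = tmap (g \o f) t.
Proof.
elim/term_ind': t => //= h ts H; rewrite -map_comp; congr Fn.
by apply: map_Forall; apply: List.Forall_impl H.
Qed.

Lemma tmap_ext X Y (f g : X -> Y) t : f =1 g -> tmap f t = tmap g t.
Proof.
move=> E; elim/term_ind': t => /= [x|h ts H]; first by rewrite E.
by congr Fn; apply: map_Forall.
Qed.

Lemma tmap_id X (f : X -> X) t : f =1 id -> tmap f t = t.
Proof.
move=> E; elim/term_ind': t => /= [x|h ts H]; first by rewrite E.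
congr Fn; rewrite -[in RHS](map_id ts); by apply: map_Forall.
Qed.

Lemma tmap_subst X Y Z (nu : Y -> Z) (s : X -> term Y) t :
  tmap nu (subst s t) = subst (fun x => tmap nu (s x)) t.
Proof.
elim/term_ind': t => //= h ts H; rewrite -map_comp; congr Fn.
by apply: map_Forall.
Qed.

Lemma subst_mterm (s : rvar -> term rvar) i t :
  subst s (mterm i t) = Fn t.1 [seq s (Some i, y) | y <- t.2].
Proof. by rewrite /mterm /= -map_comp. Qed.

Lemma rename_comp X Vn (f g : X -> X) (r : rule X Vn) :
  rename_rule g (rename_rule f r) = rename_rule (g \o f) r.
Proof.
case: r => h b; rewrite /rename_rule /=; congr Rule.
  by rewrite -map_comp; apply: eq_map => t; rewrite /= tmap_comp.
rewrite -map_comp; apply: eq_map => a /=; congr pair.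
by rewrite -map_comp; apply: eq_map => t; rewrite /= tmap_comp.
Qed.

Lemma rename_id X Vn (f : X -> X) (r : rule X Vn) : f =1 id -> rename_rule f r = r.
Proof.
move=> E; case: r => h b; rewrite /rename_rule /=; congr Rule.
  by rewrite -[in RHS](map_id h); apply: eq_map => t; rewrite tmap_id.
rewrite -[in RHS](map_id b); apply: eq_map => -[v ts] /=; congr pair.
by rewrite -[in RHS](map_id ts); apply: eq_map => t; rewrite tmap_id.
Qed.

Lemma variant_sym X Vn (r1 r2 : rule X Vn) : variant r1 r2 -> variant r2 r1.
Proof.
case=> f [[g fg gf] <-]; exists g; split; first by exists f.
by rewrite rename_comp rename_id.
Qed.

Lemma variant_trans X Vn (r1 r2 r3 : rule X Vn) : variant r1 r2 -> variant r2 r3 -> variant r1 r3.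
Proof.
case=> f [bf <-] [g [bg <-]]; exists (g \o f); split; first exact: bij_comp.
by rewrite rename_comp.
Qed.

Lemma rename_ans X Vn ext (f : X -> X) (r : rule X Vn) t :
  bijective f -> rule_ans ext r t -> rule_ans ext (rename_rule f r) t.
Proof.
case=> g fg gf [nu [Hb ->]]; exists (nu \o g); split.
  move=> a /In_map_iff [b [<- Hb']] /=.
  case: (Hb b Hb') => tup [H1 H2]; exists tup; split => //.
  rewrite -map_comp -H2; apply: eq_map => u /=; rewrite tmap_comp.
  by apply: tmap_ext => x /=; rewrite fg.
rewrite /= -map_comp; apply: eq_map => u /=; rewrite tmap_comp.
by apply: tmap_ext => x /=; rewrite fg.
Qed.

Lemma variant_ans X Vn ext (r1 r2 : rule X Vn) t :
  variant r1 r2 -> rule_ans ext r1 t -> rule_ans ext r2 t.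
Proof. by case=> f [bf <-]; apply: rename_ans. Qed.

Definition a0 : nat * seq nat := (0, [::]).

Lemma nth_self (T : Type) (x0 : T) s i : nth (nth x0 s i) s i = nth x0 s i.
Proof. by case: (ltnP i (size s)) => H; [apply: set_nth_default | rewrite !nth_default]. Qed.

Definition good Vn (m0 : mapping Vn) (ext : Vn -> seq const -> Prop) (q : cq)
  (ms : seq (mapping Vn)) (th : nat -> term const) (mu : nat -> nat -> const) : Prop :=
  size ms = size (qbody q) /\
  forall i, i < size (qbody q) ->
    mpred (nth m0 ms i) = (nth a0 (qbody q) i).1 /\
    map th (nth a0 (qbody q) i).2 =
      [seq Fn t.1 (map (fun y => Leaf (mu i y)) t.2) | t <- mhead (nth m0 ms i)] /\
    ext (mview (nth m0 ms i)) (map (mu i) (mbody (nth m0 ms i))).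

Section Gen.
Variable Vn : Type.
Variable m0 : mapping Vn.
Variable q : cq.
Implicit Types (ms : seq (mapping Vn)) (s : rvar -> term rvar).

Lemma unifier_nth ms s : unifier q ms s -> forall i, i < size (qbody q) ->
   mpred (nth m0 ms i) = (nth a0 (qbody q) i).1 /\
   [seq s (None, v) | v <- (nth a0 (qbody q) i).2] =
   [seq Fn t.1 [seq s (Some i, y) | y <- t.2] | t <- mhead (nth m0 ms i)].
Proof.
move=> H i Hi.
case: (H i (nth a0 (qbody q) i) (nth m0 ms i) Hi (set_nth_default _ _ Hi) (nth_self _ _ _)) => H1 H2.
split => //; rewrite H2; apply: eq_map => t; exact: subst_mterm.
Qed.

Lemma nth_unifier ms s : size ms = size (qbody q) ->
  (forall i, i < size (qbody q) ->
   mpred (nth m0 ms i) = (nth a0 (qbody q) i).1 /\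
   [seq s (None, v) | v <- (nth a0 (qbody q) i).2] =
   [seq Fn t.1 [seq s (Some i, y) | y <- t.2] | t <- mhead (nth m0 ms i)]) ->
  unifier q ms s.
Proof.
move=> Hs H i a m Hi <- <-.
rewrite (set_nth_default a0) // (set_nth_default m0) ?Hs //.
case: (H i Hi) => H1 H2; split => //; rewrite H2; apply: eq_map => t.
by rewrite subst_mterm.
Qed.

Lemma unifier_pos ms s i k : unifier q ms s -> i < size (qbody q) ->
  k < size (nth a0 (qbody q) i).2 ->
  size (nth a0 (qbody q) i).2 = size (mhead (nth m0 ms i)) /\
  s (None, nth 0 (nth a0 (qbody q) i).2 k) =
   Fn (nth a0 (mhead (nth m0 ms i)) k).1
      [seq s (Some i, y) | y <- (nth a0 (mhead (nth m0 ms i)) k).2].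
Proof.
move=> Hu Hi Hk; case: (unifier_nth Hu Hi) => _ E.
have Es := congr1 size E; rewrite !size_map in Es; split => //.
have := congr1 (fun l => nth (Leaf (None, 0)) l k) E.
rewrite (nth_map 0) // (nth_map a0) //; by rewrite -Es.
Qed.

Definition enc (c : const) : rvar := (None, c).
Definition s0 (th : nat -> term const) (mu : nat -> nat -> const) (w : rvar) : term rvar :=
  match w with (None, x) => tmap enc (th x) | (Some i, z) => Leaf (enc (mu i z)) end.

Lemma good_unifier ext ms th mu : good m0 ext q ms th mu -> unifier q ms (s0 th mu).
Proof.
case=> Hs H; apply: nth_unifier => // i Hi; case: (H i Hi) => H1 [H2 _]; split => //.
have -> : [seq s0 th mu (None, v) | v <- (nth a0 (qbody q) i).2] =
          map (tmap enc) (map th (nth a0 (qbody q) i).2) by rewrite -map_comp.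
rewrite H2 -map_comp; apply: eq_map => t /=; congr Fn.
by rewrite -!map_comp.
Qed.

Lemma In_gen_body ms s i : i < size ms ->
  List.In (mview (nth m0 ms i), [seq s (Some i, z) | z <- mbody (nth m0 ms i)]) (rbody (gen_rule q ms s)).
Proof.
move=> Hi; rewrite /gen_rule /=.
have -> : (mview (nth m0 ms i), [seq s (Some i, z) | z <- mbody (nth m0 ms i)]) =
  (fun im : nat * mapping Vn => (mview im.2, [seq s (Some im.1, z) | z <- mbody im.2]))
   (nth (0, m0) (zip (iota 0 (size ms)) ms) i).
  by rewrite nth_zip ?size_iota // nth_iota.
apply: In_map; apply: In_nth; by rewrite size_zip size_iota minnn.
Qed.

Lemma sem1 ext ms s t : (forall m, List.In m ms -> mapping_wf m) -> size ms = size (qbody q) ->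
  unifier q ms s -> rule_ans ext (gen_rule q ms s) t ->
  exists th mu, good m0 ext q ms th mu /\ t = map th (qhead q).
Proof.
move=> Hwf Hs Hu [nu [Hb ->]].
pose th x := tmap nu (s (None, x)).
pose mu i z := match tmap nu (s (Some i, z)) with Leaf c => c | _ => 0 end.
exists th, mu; split; last by rewrite /= -map_comp.
split => // i Hi.
have Hi' : i < size ms by rewrite Hs.
set m := nth m0 ms i.
case: (Hb _ (In_gen_body s Hi')) => tup [Hext E] /=.
rewrite -map_comp in E.
have Es := congr1 size E; rewrite !size_map in Es.
have Lz : forall z, z \in mbody m -> tmap nu (s (Some i, z)) = Leaf (mu i z).
  move=> z Hz; have Hk := Hz; rewrite -index_mem in Hk.
  have := congr1 (fun l => nth (Leaf 0) l (index z (mbody m))) E.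
  rewrite /= (nth_map 0) // (nth_map 0) -?Es // nth_index // => H.
  by rewrite /mu /= -[tmap nu (s (Some i, z))]/((tmap nu \o (fun z => s (Some i, z))) z) H.
have Et : tup = map (mu i) (mbody m).
  apply: (@eq_from_nth _ 0); first by rewrite size_map Es.
  move=> k Hk; have Hk' : k < size (mbody m) by rewrite Es.
  have := congr1 (fun l => nth (Leaf 0) l k) E.
  rewrite /= !(nth_map 0) //= /comp Lz ?mem_nth //.
  by case=> ->.
case: (unifier_nth Hu Hi) => H1 H2.
split => //; split; last by rewrite -Et.
rewrite -/m /th.
have -> : [seq tmap nu (s (None, x)) | x <- (nth a0 (qbody q) i).2] =
  map (tmap nu) [seq s (None, v) | v <- (nth a0 (qbody q) i).2] by rewrite -map_comp.
rewrite H2 -map_comp; apply: eq_in_map_In => tt Htt /=; congr Fn.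
rewrite -map_comp; apply/eq_in_map => y Hy /=; apply: Lz.
by move: (Hwf _ (In_nth m0 Hi') tt Htt) => /(_ y Hy).
Qed.

End Gen.

Lemma occ (qb : seq (nat * seq nat)) x : x \in flatten [seq a.2 | a <- qb] ->
  exists i k, i < size qb /\ k < size (nth a0 qb i).2 /\ nth 0 (nth a0 qb i).2 k = x.
Proof.
case/flattenP => l /mapP [a Ha ->] Hx.
exists (index a qb), (index x a.2); rewrite index_mem Ha nth_index //.
by rewrite index_mem Hx nth_index.
Qed.

Section Gen2.
Variable Vn : Type.
Variable m0 : mapping Vn.
Variable q : cq.
Implicit Types (ms : seq (mapping Vn)) (s : rvar -> term rvar).

Lemma sem2 ext ms s th mu : mgu q ms s ->
  {subset qhead q <= flatten [seq a.2 | a <- qbody q]} ->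
  good m0 ext q ms th mu -> rule_ans ext (gen_rule q ms s) (map th (qhead q)).
Proof.
move=> [Hu Hmg] Hh Hg.
have [rho Hrho] := Hmg _ (good_unifier Hg).
case: Hg => Hs Hg.
pose nu w := match rho w with Leaf (_, c) => c | _ => 0 end.
have K : forall i z, tmap nu (s (Some i, z)) = Leaf (mu i z).
  move=> i z; have := Hrho (Some i, z); rewrite /=.
  case: (s (Some i, z)) => [w|g ts] //= H.
  by rewrite /nu -H.
exists nu; split.
  move=> a /In_map_iff [[i m] [<- Hin]].
  case: (In_zip_iota Hin) => /= Hi; rewrite subn0 => Hm.
  have Hi' : i < size (qbody q) by rewrite -Hs.
  have Em : nth m0 ms i = m by rewrite -Hm; apply: set_nth_default.
  case: (Hg i Hi') => _ [_]; rewrite Em => He.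
  exists (map (mu i) (mbody m)); split => //=.
  by rewrite -!map_comp; apply: eq_map => z /=; rewrite K.
rewrite /= -map_comp; apply/eq_in_map => x /Hh /occ [i [k [Hi [Hk Ex]]]] /=.
case: (unifier_pos m0 Hu Hi Hk) => Hsz; rewrite Ex => ->.
case: (Hg i Hi) => _ [Hth _].
have := congr1 (fun l => nth (Leaf 0) l k) Hth.
rewrite (nth_map 0) // Ex (nth_map a0) -?Hsz // => -> /=; congr Fn.
by rewrite -map_comp; apply: eq_map => y /=; rewrite K.
Qed.

Definition equiv ms (w w' : rvar) := forall s', unifier q ms s' -> s' w = s' w'.

Lemma equiv_ex ms w : exists w', pb (equiv ms w w').
Proof. by exists w; apply/pbP. Qed.

Definition rep ms (w : rvar) : rvar := xchoose (equiv_ex ms w).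

Lemma rep_equiv ms w : equiv ms w (rep ms w).
Proof. by apply/pbP; exact: (xchooseP (equiv_ex ms w)). Qed.

Lemma rep_eq ms w w' : equiv ms w w' -> rep ms w = rep ms w'.
Proof.
move=> E; apply: eq_xchoose => z; apply/idP/idP => /pbP H; apply/pbP => s' Hs'.
  by rewrite -(E s' Hs') (H s' Hs').
by rewrite (E s' Hs') (H s' Hs').
Qed.

Definition smg ms (w : rvar) : term rvar :=
  match w with
  | (None, v) =>
     let i := find (fun a : nat * seq nat => v \in a.2) (qbody q) in
     if i < size (qbody q) then
       let t := nth a0 (nth [::] (map (@mhead Vn) ms) i) (index v (nth a0 (qbody q) i).2) in
       Fn t.1 [seq Leaf (rep ms (Some i, y)) | y <- t.2]
     else Leaf w
  | _ => Leaf (rep ms w)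
  end.

Lemma smg_None ms s1 i k : unifier q ms s1 -> size ms = size (qbody q) ->
  i < size (qbody q) -> k < size (nth a0 (qbody q) i).2 ->
  smg ms (None, nth 0 (nth a0 (qbody q) i).2 k) =
    Fn (nth a0 (mhead (nth m0 ms i)) k).1
       [seq Leaf (rep ms (Some i, y)) | y <- (nth a0 (mhead (nth m0 ms i)) k).2].
Proof.
move=> Hu Hs Hi Hk; set v := nth 0 _ k.
have Hv : v \in (nth a0 (qbody q) i).2 by rewrite mem_nth.
have Hhas : has (fun a : nat * seq nat => v \in a.2) (qbody q).
  by apply/hasP; exists (nth a0 (qbody q) i) => //; rewrite mem_nth.
rewrite /smg; set i0 := find _ _.
have Hi0 : i0 < size (qbody q) by rewrite -has_find.
rewrite Hi0 /=.
have Hv0 : v \in (nth a0 (qbody q) i0).2 by apply: (nth_find a0 Hhas).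
set k0 := index v _.
have Hk0 : k0 < size (nth a0 (qbody q) i0).2 by rewrite index_mem.
have Ev0 : nth 0 (nth a0 (qbody q) i0).2 k0 = v by rewrite nth_index.
rewrite (nth_map m0) ?Hs //.
have G : forall s', unifier q ms s' ->
   Fn (nth a0 (mhead (nth m0 ms i0)) k0).1
      [seq s' (Some i0, y) | y <- (nth a0 (mhead (nth m0 ms i0)) k0).2] =
   Fn (nth a0 (mhead (nth m0 ms i)) k).1
      [seq s' (Some i, y) | y <- (nth a0 (mhead (nth m0 ms i)) k).2].
  move=> s' Hs'.
  case: (unifier_pos m0 Hs' Hi0 Hk0) => _ <-; rewrite Ev0.
  by case: (unifier_pos m0 Hs' Hi Hk) => _ <-.
have := G _ Hu; case=> E1 E2; rewrite E1; congr Fn.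
have Esz := congr1 size E2; rewrite !size_map in Esz.
apply: (@eq_from_nth _ (Leaf (None, 0))); first by rewrite !size_map.
move=> l; rewrite size_map => Hl; rewrite !(nth_map 0) -?Esz //; congr Leaf.
apply: rep_eq => s' Hs'; case: (G _ Hs') => _ E.
have := congr1 (fun l' => nth (Leaf (None, 0)) l' l) E.
by rewrite !(nth_map 0) -?Esz.
Qed.

Lemma mgu_exists ms s1 : unifier q ms s1 -> size ms = size (qbody q) ->
  mgu q ms (smg ms) /\ forall i y, smg ms (Some i, y) = Leaf (rep ms (Some i, y)).
Proof.
move=> Hu Hs; split => //; split.
  apply: (@nth_unifier _ m0) => // i Hi; case: (unifier_nth m0 Hu Hi) => H1 H2; split => //.
  have Esz := congr1 size H2; rewrite !size_map in Esz.
  apply: (@eq_from_nth _ (Leaf (None, 0))); first by rewrite !size_map.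
  move=> k; rewrite size_map => Hk.
  rewrite (nth_map 0) // (nth_map a0) -?Esz // (smg_None Hu) //.
move=> s' Hs'; exists s' => -[[i|] v] /=.
  by rewrite (rep_equiv (Some i, v) Hs').
case: ifP => Hlt; last by [].
set i0 := find _ _.
have Hhas : has (fun a : nat * seq nat => v \in a.2) (qbody q) by rewrite has_find.
have Hv0 : v \in (nth a0 (qbody q) i0).2 by apply: (nth_find a0 Hhas).
set k0 := index v _.
have Hk0 : k0 < size (nth a0 (qbody q) i0).2 by rewrite index_mem.
have Ev0 : nth 0 (nth a0 (qbody q) i0).2 k0 = v by rewrite nth_index.
rewrite (nth_map m0) ?Hs //=.
case: (unifier_pos m0 Hs' Hlt Hk0) => _; rewrite Ev0 => ->.
congr Fn; rewrite -map_comp; apply: eq_map => y /=.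
by rewrite (rep_equiv (Some i0, y) Hs').
Qed.

End Gen2.

Lemma ext_bij (T : eqType) (a b : seq T) : uniq a -> uniq b -> size a = size b ->
  exists F : T -> T, bijective F /\ forall k x0, k < size a -> F (nth x0 a k) = nth x0 b k.
Proof.
move=> Ua Ub Sab.
pose U := undup (a ++ b).
pose src := a ++ [seq x <- U | x \notin a].
pose tgt := b ++ [seq x <- U | x \notin b].
have Us : uniq src.
  rewrite cat_uniq Ua filter_uniq ?undup_uniq // andbT.
  by apply/hasPn => x; rewrite mem_filter => /andP [].
have Ut : uniq tgt.
  rewrite cat_uniq Ub filter_uniq ?undup_uniq // andbT.
  by apply/hasPn => x; rewrite mem_filter => /andP [].
have Ms : forall x, (x \in src) = (x \in U).
  by move=> x; rewrite mem_cat mem_filter mem_undup mem_cat; case: (x \in a).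
have Mt : forall x, (x \in tgt) = (x \in U).
  by move=> x; rewrite mem_cat mem_filter mem_undup mem_cat; case: (x \in b); rewrite ?orbT.
have Sst : size src = size tgt.
  by apply: perm_size; apply: uniq_perm => // x; rewrite Ms Mt.
pose F x := if x \in src then nth x tgt (index x src) else x.
pose G x := if x \in tgt then nth x src (index x tgt) else x.
have FG : forall (s1 s2 : seq T), uniq s2 -> size s1 = size s2 -> (forall x, (x \in s1) = (x \in s2)) ->
   cancel (fun x => if x \in s1 then nth x s2 (index x s1) else x)
          (fun x => if x \in s2 then nth x s1 (index x s2) else x).
  move=> s1 s2 U2 S12 M12 x; case Hx: (x \in s1).
    have Hi : index x s1 < size s2 by rewrite -S12 index_mem.
    rewrite mem_nth // index_uniq //.
    by rewrite (set_nth_default x) ?nth_index // S12.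
  by rewrite -M12 Hx.
exists F; split.
  apply: (@Bijective _ _ F G).
    by apply: FG => // x; rewrite Ms Mt.
  by apply: FG => // x; rewrite ?Ms ?Mt // -Sst.
move=> k x0 Hk.
have Hin : nth x0 a k \in src by rewrite mem_cat mem_nth.
rewrite /F Hin index_cat mem_nth // index_uniq // nth_cat -Sab Hk.
by apply: set_nth_default; rewrite -Sab.
Qed.

Section Var.
Variable Vn : Type.
Variable m0 : mapping Vn.
Variable q : cq.
Implicit Types (ms : seq (mapping Vn)) (s : rvar -> term rvar).

Definition phi s (w : rvar) : rvar := match s w with Leaf u => u | _ => w end.

Lemma mgu_variant ms s1 s2 : (forall m, List.In m ms -> mapping_wf m) ->
  size ms = size (qbody q) -> {subset qhead q <= flatten [seq a.2 | a <- qbody q]} ->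
  mgu q ms s1 -> mgu q ms s2 -> variant (gen_rule q ms s1) (gen_rule q ms s2).
Proof.
move=> Hwf Hs Hh Hm1 Hm2.
have [Hsm Hleaf] := mgu_exists m0 (proj1 Hm1) Hs.
have Lf : forall s, mgu q ms s -> forall i y, s (Some i, y) = Leaf (phi s (Some i, y)).
  move=> s [_ Hs'] i y; have [rho Hr] := Hs' _ (proj1 Hsm).
  have := Hr (Some i, y); rewrite Hleaf /phi.
  by case: (s (Some i, y)).
have Ker : forall s s', mgu q ms s -> mgu q ms s' -> forall w w', s w = s w' -> s' w = s' w'.
  move=> s s' [_ Hs'] [Hu' _] w w' E; have [rho Hr] := Hs' _ Hu'.
  by rewrite !Hr E.
pose Rl := flatten [seq [seq (Some i, z) | z <- mbody (nth m0 ms i)] | i <- iota 0 (size ms)].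
have RlS : forall w, w \in Rl -> exists i y, w = (Some i, y).
  move=> w /flattenP [l /mapP [i _ ->] /mapP [z _ ->]]; by exists i, z.
have RlI : forall i z, i < size ms -> z \in mbody (nth m0 ms i) -> (Some i, z) \in Rl.
  move=> i z Hi Hz; apply/flattenP; exists [seq (Some i, z) | z <- mbody (nth m0 ms i)].
    by apply: map_f; rewrite mem_iota.
  by apply: map_f.
pose P := undup [seq (phi s1 w, phi s2 w) | w <- Rl].
have HP : forall p, p \in P -> exists2 w, w \in Rl & p = (phi s1 w, phi s2 w).
  by move=> p; rewrite mem_undup => /mapP [w Hw ->]; exists w.
have PhiK : forall s s', mgu q ms s -> mgu q ms s' -> forall w w', w \in Rl -> w' \in Rl ->
    phi s w = phi s w' -> phi s' w = phi s' w'.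
  move=> s s' H H' w w' /RlS [i [y ->]] /RlS [i' [y' ->]] E.
  have : s (Some i, y) = s (Some i', y') by rewrite !(Lf s H) E.
  move/(Ker s s' H H'); rewrite !(Lf s' H'); by case.
have Ua : uniq (map fst P).
  rewrite map_inj_in_uniq ?undup_uniq // => p p' /HP [w Hw ->] /HP [w' Hw' ->] /= E.
  by rewrite E (PhiK s1 s2 Hm1 Hm2 w w').
have Ub : uniq (map snd P).
  rewrite map_inj_in_uniq ?undup_uniq // => p p' /HP [w Hw ->] /HP [w' Hw' ->] /= E.
  by rewrite E (PhiK s2 s1 Hm2 Hm1 w w').
have Sab : size (map fst P) = size (map snd P) by rewrite !size_map.
have [F [bF HF]] := ext_bij Ua Ub Sab.
have HFw : forall w, w \in Rl -> F (phi s1 w) = phi s2 w.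
  move=> w Hw; have Hp : (phi s1 w, phi s2 w) \in P by rewrite mem_undup; apply: map_f.
  set k := index (phi s1 w, phi s2 w) P.
  have Hk : k < size P by rewrite index_mem.
  have := HF k (phi s1 w); rewrite size_map => /(_ Hk).
  by rewrite !(nth_map (phi s1 w, phi s2 w)) // nth_index.
have Hmap : forall w, w \in Rl -> tmap F (s1 w) = s2 w.
  move=> w Hw; have [i [y Ew]] := RlS w Hw; rewrite Ew.
  by rewrite (Lf s1 Hm1) (Lf s2 Hm2) /= -Ew HFw.
exists F; split => //; rewrite /rename_rule /gen_rule /=; congr Rule.
  rewrite -map_comp; apply/eq_in_map => x /Hh /occ [i [k [Hi [Hk Ex]]]] /=; rewrite -Ex.
  case: (unifier_pos m0 (proj1 Hm1) Hi Hk) => Hsz ->.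
  case: (unifier_pos m0 (proj1 Hm2) Hi Hk) => _ -> /=.
  congr Fn; rewrite -map_comp; apply/eq_in_map => y Hy /=; apply: Hmap.
  have Hi' : i < size ms by rewrite Hs.
  apply: RlI => //.
  have Hk2 : k < size (mhead (nth m0 ms i)) by rewrite -Hsz.
  have Ht := In_nth a0 Hk2.
  by move: (Hwf _ (In_nth m0 Hi') _ Ht) => /(_ y Hy).
rewrite -map_comp; apply: eq_in_map_In => -[i m] Hin /=.
case: (In_zip_iota Hin) => /= Hi; rewrite subn0 => Hm.
have Em : nth m0 ms i = m by rewrite -Hm; apply: set_nth_default.
congr pair; rewrite -map_comp; apply/eq_in_map => z Hz /=; apply: Hmap.
by apply: RlI => //; rewrite Em.
Qed.

End Var.

Definition m0n : mapping nat := Mapping 0 [::] 0 [::].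
Definition m0s : mapping signature := Mapping 0 [::] (0, [::]) [::].

Lemma sig_head_shape off fs : [seq (t.1, size t.2) | t <- sig_head off fs] = fs.
Proof.
elim: fs off => //= -[g a] fs IH off /=; by rewrite size_iota IH.
Qed.

Lemma sig_head_wf off fs t : List.In t (sig_head off fs) ->
  {subset t.2 <= iota off (sumn [seq p.2 | p <- fs])}.
Proof.
elim: fs off => //= -[g a] fs IH off /= [<-|/IH H] y /=; rewrite mem_iota.
  by rewrite mem_iota => /andP [H1 H2]; rewrite H1 /=; apply: (leq_trans H2); rewrite leq_add2l leq_addr.
move/H; rewrite mem_iota => /andP [H1 H2]; apply/andP; split.
  by apply: leq_trans H1; apply: leq_addr.
by rewrite -addnA in H2.
Qed.

Lemma wrap_wf s : mapping_wf (wrap_mapping s).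
Proof. by move=> t /sig_head_wf. Qed.

Lemma sig_head_map (h : seq (nat * seq nat)) off (mu nu : nat -> const) :
  map mu (iota off (sumn [seq p.2 | p <- [seq (t.1, size t.2) | t <- h]])) =
    map nu (flatten [seq t.2 | t <- h]) ->
  [seq Fn t.1 (map (fun y => Leaf (mu y)) t.2) | t <- sig_head off [seq (t.1, size t.2) | t <- h]] =
  [seq Fn t.1 (map (fun y => Leaf (nu y)) t.2) | t <- h].
Proof.
elim: h off => //= -[g ys] h IH off /=.
rewrite iotaD map_cat map_cat => /eqP; rewrite eqseq_cat ?size_map ?size_iota //.
case/andP => /eqP E1 /eqP E2.
rewrite (IH _ E2); congr cons; congr Fn.
have -> : [seq Leaf (mu y) | y <- iota off (size ys)] = map Leaf (map mu (iota off (size ys))) by rewrite -map_comp.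
by rewrite E1 -map_comp.
Qed.

Lemma In_wrapM M w : List.In w (wrapM M) -> exists m, List.In m M /\ w = wrap_mapping (sign m).
Proof.
case/In_map_iff => sg [<- /In_mem]; rewrite mem_undup => /mem_In /In_map_iff [m [<- Hm]].
by exists m.
Qed.

Lemma wrapM_In M m : List.In m M -> List.In (wrap_mapping (sign m)) (wrapM M).
Proof.
move=> H; apply: In_map; apply: mem_In; rewrite mem_undup; apply: In_mem; exact: In_map.
Qed.

Section Wrap.
Variables (vdef : view_defs) (D : instance) (M : seq (mapping nat)) (q : cq).

Lemma W1 ws th mu : adm_tuple (wrapM M) q ws -> good m0s (wrap_ext vdef D M) q ws th mu ->
  exists ms mu', adm_tuple M q ms /\ good m0n (base_ext vdef D) q ms th mu'.
Proof.
move=> [Hs Hin] [_ Hg].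
pose P i (p : mapping nat * (nat -> const)) :=
  List.In p.1 M /\ mpred p.1 = (nth a0 (qbody q) i).1 /\
  map th (nth a0 (qbody q) i).2 = [seq Fn t.1 (map (fun y => Leaf (p.2 y)) t.2) | t <- mhead p.1] /\
  base_ext vdef D (mview p.1) (map p.2 (mbody p.1)).
have Hch : forall i, exists p, i < size (qbody q) -> P i p.
  move=> i; case: (ltnP i (size (qbody q))) => Hi; last by exists (m0n, fun _ => 0).
  have Hi' : i < size ws by rewrite Hs.
  case: (In_wrapM (Hin _ (In_nth m0s Hi'))) => m' [_ Ew].
  case: (Hg i Hi); rewrite Ew; set sg := sign m' => H1 [H2 [m [Hm [Hsg [nu [Hb Ht]]]]]].
  have Hsg' : sign m = sg := Hsg.
  exists (m, nu) => _; split => //; split; first by rewrite -H1 -Hsg'.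
  split => //; rewrite H2 -Hsg'; apply: sig_head_map; rewrite -Ht -Hsg' //.
pose f i := proj1_sig (constructive_indefinite_description _ (Hch i)).
have Hf : forall i, i < size (qbody q) -> P i (f i).
  by move=> i; exact: (proj2_sig (constructive_indefinite_description _ (Hch i))).
exists (mkseq (fun i => (f i).1) (size (qbody q))), (fun i => (f i).2); split.
  split; first by rewrite size_mkseq.
  move=> m /In_map_iff [i [<- /In_mem]]; rewrite mem_iota add0n => /andP [_ Hi].
  by case: (Hf i Hi).
split; first by rewrite size_mkseq.
move=> i Hi; rewrite nth_mkseq //; by case: (Hf i Hi) => _ H.
Qed.

Lemma W2 ms th nu : adm_tuple M q ms -> good m0n (base_ext vdef D) q ms th nu ->
  adm_tuple (wrapM M) q (map (fun m => wrap_mapping (sign m)) ms) /\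
  good m0s (wrap_ext vdef D M) q (map (fun m => wrap_mapping (sign m)) ms) th
    (fun i p => nth 0 (map (nu i) (flatten [seq t.2 | t <- mhead (nth m0n ms i)])) p).
Proof.
move=> [Hs Hin] [_ Hg]; split.
  split; first by rewrite size_map.
  move=> w /In_map_iff [m [<- Hm]]; apply: wrapM_In; exact: Hin.
split; first by rewrite size_map.
move=> i Hi; have Hi' : i < size ms by rewrite Hs.
rewrite (nth_map m0n) //=.
set m := nth m0n ms i.
set L := flatten [seq t.2 | t <- mhead m].
have EL : map (fun p => nth 0 (map (nu i) L) p)
              (iota 0 (sumn [seq p.2 | p <- [seq (t.1, size t.2) | t <- mhead m]])) = map (nu i) L.
  have -> : sumn [seq p.2 | p <- [seq (t.1, size t.2) | t <- mhead m]] = size (map (nu i) L).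
    by rewrite size_map size_flatten /shape -!map_comp.
  exact: mkseq_nth.
case: (Hg i Hi) => H1 [H2 H3]; split => //; split.
  rewrite H2; apply/esym/sig_head_map; exact: EL.
exists m; split; first by apply: Hin; apply: In_nth.
split => //; exists (nu i); split => //.
Qed.

Lemma Wdet ext1 ext2 ws1 ws2 th1 th2 mu1 mu2 :
  qhead q =i flatten [seq a.2 | a <- qbody q] ->
  adm_tuple (wrapM M) q ws1 -> adm_tuple (wrapM M) q ws2 ->
  good m0s ext1 q ws1 th1 mu1 -> good m0s ext2 q ws2 th2 mu2 ->
  map th1 (qhead q) = map th2 (qhead q) -> ws1 = ws2.
Proof.
move=> Hh [Hs1 Hin1] [Hs2 Hin2] [_ Hg1] [_ Hg2] Eth.
apply: (eq_from_nth (x0 := m0s)); first by rewrite Hs1 Hs2.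
move=> i; rewrite Hs1 => Hi.
have Hi1 : i < size ws1 by rewrite Hs1.
have Hi2 : i < size ws2 by rewrite Hs2.
case: (In_wrapM (Hin1 _ (In_nth m0s Hi1))) => m1 [_ E1].
case: (In_wrapM (Hin2 _ (In_nth m0s Hi2))) => m2 [_ E2].
rewrite E1 E2; congr wrap_mapping.
case: (Hg1 i Hi); case: (Hg2 i Hi); rewrite E1 E2 /= => P2 [T2 _] P1 [T1 _].
have Ea : map th1 (nth a0 (qbody q) i).2 = map th2 (nth a0 (qbody q) i).2.
  apply/eq_in_map => x Hx; apply: (proj2 (eq_in_map _ _ _) Eth).
  rewrite Hh; apply/flattenP; exists (nth a0 (qbody q) i).2 => //.
  by apply: map_f; apply: mem_nth.
pose shp (u : term const) := match u with Fn g ts => (g, size ts) | _ => (0, 0) end.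
have S1 := congr1 (map shp) T1; have S2 := congr1 (map shp) T2.
rewrite -!map_comp in S1 S2.
have K : forall sg (mu : nat -> const),
    [seq (shp \o (fun t => Fn t.1 [seq Leaf (mu y) | y <- t.2])) i | i <- sig_head 0 sg] = sg.
  move=> sg mu; rewrite -[RHS](sig_head_shape 0 sg); apply: eq_map => t /=; by rewrite size_map.
rewrite K in S1; rewrite K in S2.
have X1 : (sign m1).1 = (sign m2).1 by rewrite /= P1 P2.
have X2 : (sign m1).2 = (sign m2).2 by rewrite /= -S1 -S2 (map_comp shp th1) (map_comp shp th2) Ea.
by move: X1 X2; case: (sign m1) => ? ?; case: (sign m2) => ? ? /= -> ->.
Qed.

Fixpoint tuples (T : Type) (E : seq T) n : seq (seq T) :=
  if n is n'.+1 then [seq x :: s | x <- E, s <- tuples E n'] else [:: [::]].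

Lemma mem_tuples (T : eqType) (E : seq T) s : all (mem E) s -> s \in tuples E (size s).
Proof.
elim: s => [|x s IH] /=; first by rewrite inE.
by case/andP => Hx Hs; apply: allpairs_f => //; apply: IH.
Qed.

Definition Cset := flatten (flatten [seq vdef (mview m) D | m <- M]).
Definition Eset := flatten [seq [seq Fn t.1 (map Leaf cs) | cs <- tuples Cset (size t.2)]
                           | t <- flatten [seq mhead m | m <- M]].
Definition Lset := tuples Eset (size (qhead q)).

Lemma superset ms th nu : (forall m, List.In m M -> mapping_wf m) ->
  qhead q =i flatten [seq a.2 | a <- qbody q] ->
  adm_tuple M q ms -> good m0n (base_ext vdef D) q ms th nu -> map th (qhead q) \in Lset.
Proof.
move=> Hwf Hh [Hs Hin] [_ Hg].
rewrite /Lset -(size_map th); apply: mem_tuples; apply/allP => u /mapP [x Hx ->].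
rewrite Hh in Hx; case: (occ Hx) => i [k [Hi [Hk Ex]]].
have Hi' : i < size ms by rewrite Hs.
set m := nth m0n ms i.
have HmM : List.In m M by apply: Hin; apply: In_nth.
case: (Hg i Hi) => _ [T Hb].
have Sz := congr1 size T; rewrite !size_map in Sz.
have := congr1 (fun l => nth (Leaf 0) l k) T.
rewrite (nth_map 0) // (nth_map a0) -?Sz // Ex => -> /=.
set t := nth a0 (mhead m) k.
have Htm : t \in mhead m by apply: mem_nth; rewrite -Sz.
apply/flattenP; exists [seq Fn t.1 (map Leaf cs) | cs <- tuples Cset (size t.2)].
  apply: map_f; apply/flattenP; exists (mhead m) => //.
  by apply: In_mem; apply: (In_map (fun m => mhead m)).
have -> : [seq Leaf (nu i y) | y <- t.2] = map Leaf (map (nu i) t.2) by rewrite -map_comp.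
apply: map_f; rewrite -(size_map (nu i)); apply: mem_tuples.
apply/allP => c /mapP [y Hy ->].
have Hy' : y \in mbody m by apply: (Hwf m HmM t (mem_In Htm)).
apply/flattenP; exists (map (nu i) (mbody m)); last by apply: map_f.
apply/flattenP; exists (vdef (mview m) D) => //.
by apply: In_mem; apply: (In_map (fun m => vdef (mview m) D)).
Qed.

End Wrap.

Lemma sum_disj (A : Type) (l : seq A) (P : A -> bool) :
  List.ForallOrdPairs (fun r1 r2 => ~~ (P r1 && P r2)) l -> \sum_(r <- l) (P r : nat) = has P l.
Proof.
elim=> [|a l' Hf _ IH]; first by rewrite big_nil.
rewrite big_cons IH /=; case Pa: (P a) => //=.
case Hh: (has P l') => //.
case/has_In: Hh => r [Hr Pr].
by move: (proj1 (List.Forall_forall _ _) Hf r Hr); rewrite Pa Pr.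
Qed.

Lemma count_split (T R : Type) (L : seq T) (A : pred T) (l : seq R) (B : R -> pred T) :
  (forall t, (A t : nat) = \sum_(r <- l) (B r t : nat)) ->
  count A L = \sum_(r <- l) count (B r) L.
Proof.
move=> H; elim: L => [|x L IH] /=; first by rewrite big1.
rewrite IH H -big_split /=; by [].
Qed.

Lemma FOP_mono (A : Type) (R R' : A -> A -> Prop) l :
  (forall a b, List.In a l -> List.In b l -> R a b -> R' a b) ->
  List.ForallOrdPairs R l -> List.ForallOrdPairs R' l.
Proof.
move=> H HF; elim: HF H => [|a l' Hf _ IH] H; first by constructor.
constructor.
  apply/List.Forall_forall => b Hb; apply: H; [by left|by right|].
  exact: (proj1 (List.Forall_forall _ _) Hf b Hb).
by apply: IH => x y Hx Hy; apply: H; right.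
Qed.
Unset Implicit Arguments.

Theorem theorem5 (ar : nat -> nat) (vdef : view_defs) (D : instance)
    (M : seq (mapping nat)) (q : cq)
    (Pi : seq (rule rvar nat)) (Pi' : seq (rule rvar signature)) :
  (* concept and role names have arity 1 or 2 *)
  (forall L, ar L = 1 \/ ar L = 2) ->
  (forall m, List.In m M -> mapping_wf m /\ size (mhead m) = ar (mpred m)) ->
  (forall a, List.In a (qbody q) -> size a.2 = ar a.1) ->
  (* x = \bigcup_i v_i as sets of variables *)
  qhead q =i flatten [seq a.2 | a <- qbody q] ->
  is_unfolding M q Pi ->
  is_unfolding (wrapM M) q Pi' ->
  exists (nL : nat) (nr : rule rvar signature -> nat),
    card_is (dl_ans (base_ext vdef D) Pi) nL /\
    (forall r, List.In r Pi' -> card_is (rule_ans (wrap_ext vdef D M) r) (nr r)) /\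
    nL = \sum_(r <- Pi') nr r.
Proof.
move=> _ HM _ Hhead [c1 [c2 c3]] [d1 [d2 d3]].
have HhS : {subset qhead q <= flatten [seq a.2 | a <- qbody q]} by move=> x; rewrite Hhead.
have wfM : forall m, List.In m M -> mapping_wf m by move=> m /HM [].
have wfW : forall m, List.In m (wrapM M) -> mapping_wf m.
  by move=> m /In_wrapM [m' [_ ->]]; apply: wrap_wf.
set ansA := dl_ans (base_ext vdef D) Pi.
set B := rule_ans (wrap_ext vdef D M).
have A1 : forall t, ansA t -> exists ms th mu, adm_tuple M q ms /\
            good m0n (base_ext vdef D) q ms th mu /\ t = map th (qhead q).
  move=> t [r [Hr Ha]]; case: (c2 r Hr) => ms [s [Had [Hmg Hv]]].
  have Ha' := variant_ans Hv Ha.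
  have Hwf : forall m, List.In m ms -> mapping_wf m by move=> m /(proj2 Had); apply: wfM.
  case: (sem1 m0n Hwf (proj1 Had) (proj1 Hmg) Ha') => th [mu [Hg ->]].
  by exists ms, th, mu.
have A2 : forall ms th mu, adm_tuple M q ms -> good m0n (base_ext vdef D) q ms th mu ->
            ansA (map th (qhead q)).
  move=> ms th mu Had Hg; have Hu := good_unifier Hg.
  have [Hmg _] := mgu_exists m0n Hu (proj1 Had).
  case: (c1 _ _ Had Hmg) => r [Hr Hv]; exists r; split => //.
  apply: (variant_ans (variant_sym Hv)); exact: sem2 Hmg HhS Hg.
have B1 : forall r t, List.In r Pi' -> B r t -> exists ws s th mu, adm_tuple (wrapM M) q ws /\
            mgu q ws s /\ variant r (gen_rule q ws s) /\
            good m0s (wrap_ext vdef D M) q ws th mu /\ t = map th (qhead q).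
  move=> r t Hr Hb; case: (d2 r Hr) => ws [s [Had [Hmg Hv]]].
  have Hb' := variant_ans Hv Hb.
  have Hwf : forall m, List.In m ws -> mapping_wf m by move=> m /(proj2 Had); apply: wfW.
  case: (sem1 m0s Hwf (proj1 Had) (proj1 Hmg) Hb') => th [mu [Hg ->]].
  by exists ws, s, th, mu.
have BA : forall r t, List.In r Pi' -> B r t -> ansA t.
  move=> r t Hr /(B1 r t Hr) [ws [s [th [mu [Had [_ [_ [Hg ->]]]]]]]].
  case: (W1 Had Hg) => ms [mu' [Had' Hg']]; exact: A2 Had' Hg'.
have AB : forall t, ansA t -> exists r, List.In r Pi' /\ B r t.
  move=> t /A1 [ms [th [nu [Had [Hg ->]]]]].
  case: (W2 Had Hg) => Had' Hg'.
  have [Hmg _] := mgu_exists m0s (good_unifier Hg') (proj1 Had').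
  case: (d1 _ _ Had' Hmg) => r [Hr Hv]; exists r; split => //.
  apply: (variant_ans (variant_sym Hv)); exact: sem2 Hmg HhS Hg'.
have Disj : forall r1 r2 t, List.In r1 Pi' -> List.In r2 Pi' -> B r1 t -> B r2 t -> variant r1 r2.
  move=> r1 r2 t H1 H2 /(B1 r1 t H1) [ws1 [s1 [th1 [mu1 [Ha1 [Hm1 [Hv1 [Hg1 E1]]]]]]]].
  move=> /(B1 r2 t H2) [ws2 [s2 [th2 [mu2 [Ha2 [Hm2 [Hv2 [Hg2 E2]]]]]]]].
  have Ew : ws1 = ws2 by apply: (Wdet Hhead Ha1 Ha2 Hg1 Hg2); rewrite -E1 -E2.
  subst ws2.
  have Hwf : forall m, List.In m ws1 -> mapping_wf m by move=> m /(proj2 Ha1); apply: wfW.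
  have Hvg := mgu_variant m0s Hwf (proj1 Ha1) HhS Hm1 Hm2.
  exact: variant_trans Hv1 (variant_trans Hvg (variant_sym Hv2)).
have Fin : forall t, ansA t -> t \in Lset vdef D M q.
  by move=> t /A1 [ms [th [mu [Had [Hg ->]]]]]; apply: (superset wfM Hhead Had Hg).
pose L' := undup (Lset vdef D M q).
exists (count (fun t => pb (ansA t)) L'), (fun r => count (fun t => pb (B r t)) L').
split.
  exists [seq t <- L' | pb (ansA t)]; split; first by rewrite filter_uniq ?undup_uniq.
  split; last by rewrite size_filter.
  move=> t; rewrite mem_filter; split.
    by move=> H; apply/andP; split; [apply/pbP|rewrite mem_undup; apply: Fin].
  by case/andP => /pbP.
split.
  move=> r Hr; exists [seq t <- L' | pb (B r t)]; split; first by rewrite filter_uniq ?undup_uniq.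
  split; last by rewrite size_filter.
  move=> t; rewrite mem_filter; split.
    move=> H; apply/andP; split; first by apply/pbP.
    by rewrite mem_undup; apply: Fin; apply: (BA r).
  by case/andP => /pbP.
apply: count_split => t.
rewrite sum_disj.
  congr nat_of_bool; apply/idP/idP.
    move/pbP => /AB [r [Hr Hb]]; apply/has_In; exists r; split => //; exact/pbP.
  case/has_In => r [Hr /pbP Hb]; apply/pbP; exact: BA Hr Hb.
apply: (FOP_mono _ d3) => r1 r2 H1 H2 Hnv; apply/negP => /andP [/pbP Hb1 /pbP Hb2].
exact: Hnv (Disj r1 r2 t H1 H2 Hb1 Hb2).
Qed.
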